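(* Let $G$ be a group, $\mathcal{O}$ a conjugacy class of $G$, and $H$ a subgroup of $G$ such that $\mathcal{O}$ contains two distinct conjugacy classes $\mathcal{O}_1,\mathcal{O}_2$ of $H$. Assume there exist $r\in\mathcal{O}_1$ and $s\in\mathcal{O}_2$ such that $(rs)^2$ does not belong to the centralizer of $r$ in $G$. Then $\mathcal{O}$ is of type D.
   Context: A conjugacy class $\mathcal{O}$ of a group (regarded as a rack with $x\triangleright y=xyx^{-1}$) is of type D iff there exist $r,s\in\mathcal{O}$ with $(rs)^2\neq(sr)^2$ such that $r$ and $s$ are not conjugate in the subgroup $\langle r,s\rangle$. (In rack terms: a rack is of type D if it contains a subrack that is a disjoint union $R\sqcup S$ of two subracks with $r\triangleright(s\triangleright(r\triangleright s))\neq s$ for some $r\in R$, $s\in S$.) *)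

(* Defs.v *)
From HB Require Import structures.
From mathcomp Require Import all_boot.
Set Implicit Arguments. Unset Strict Implicit. Unset Printing Implicit Defensive.

(* Arbitrary (possibly infinite) groups: MathComp's [groupType] from monoid.v.
   Subsets of a group are Prop-valued predicates [G -> Prop].
   Conjugation: [x ^ y = y^-1 * x * y] (MathComp's conjg). *)
Local Open Scope group_scope.

Section Defs.
Variable G : groupType.

Definition is_subgroup (K : G -> Prop) : Prop :=
  [/\ K 1, (forall x y, K x -> K y -> K (x * y)) & (forall x, K x -> K x^-1)].

Definition gen2 (r s : G) : G -> Prop :=
  fun x => forall K, is_subgroup K -> K r -> K s -> K x.

Definition conj_in (K : G -> Prop) (x y : G) : Prop :=
  exists2 g, K g & y = x ^ g.

Definition is_conj_class (K : G -> Prop) (C : G -> Prop) : Prop :=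
  exists2 a, K a & forall x, C x <-> conj_in K a x.

Definition centralizer (r : G) : G -> Prop := fun x => commute r x.

(* type D for a conjugacy class O of G (group-theoretic characterization from the paper) *)
Definition type_D (O : G -> Prop) : Prop :=
  exists r s, [/\ O r, O s, (r * s) ^+ 2 <> (s * r) ^+ 2 & ~ conj_in (gen2 r s) r s].
End Defs.

(* Main.v *)
Require Import Defs.
From mathcomp Require Import all_boot.
Local Open Scope group_scope.

Section Aux.
Variable G : groupType.
Implicit Types H : G -> Prop.

Lemma conj_sym H a b : is_subgroup H -> conj_in H a b -> conj_in H b a.
Proof.
case=> _ _ HV [g Hg ->]; exists g^-1; first exact: HV.
by rewrite conjgK.
Qed.

Lemma conj_trans H a b c : is_subgroup H -> conj_in H a b -> conj_in H b c ->
  conj_in H a c.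
Proof.
case=> _ HM _ [g Hg ->] [h Hh ->]; exists (g * h); first exact: HM.
by rewrite conjgM.
Qed.

Lemma conj_mem H a b : is_subgroup H -> H a -> conj_in H a b -> H b.
Proof.
move=> sH Ha [g Hg ->]; case: sH => _ HM HV; rewrite conjgE.
by apply: (HM); [apply: (HV) | apply: (HM)].
Qed.
End Aux.
Arguments conj_sym {G H a b}.
Arguments conj_trans {G H a b c}.
Arguments conj_mem {G H a b}.

Theorem lemma2p5 (G : groupType) (O : G -> Prop) (H : G -> Prop)
    (O1 O2 : G -> Prop) :
  is_conj_class (fun _ => True) O ->
  is_subgroup H ->
  is_conj_class H O1 -> is_conj_class H O2 ->
  ~ (forall x, O1 x <-> O2 x) ->
  (forall x, O1 x -> O x) -> (forall x, O2 x -> O x) ->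
  (exists r s, [/\ O1 r, O2 s & ~ centralizer r ((r * s) ^+ 2)]) ->
  type_D O.
Proof.
move=> _ sH [a1 Ha1 E1] [a2 Ha2 E2] neq sO1 sO2 [r [s [Or Os nc]]].
exists r, s; split; [exact: sO1 | exact: sO2 | |].
  move=> E; apply: nc; rewrite /centralizer /commute.
  rewrite {1}E !expgS !expg0 !mulg1 !mulgA; reflexivity.
move=> [k Gk Ek]; apply: neq => x.
have cr : conj_in H a1 r by apply/E1.
have cs : conj_in H a2 s by apply/E2.
have Hr : H r by exact: (conj_mem sH Ha1 cr).
have Hs : H s by exact: (conj_mem sH Ha2 cs).
have Hk : H k by apply: Gk.
have c12 : conj_in H a1 a2.
  apply: (conj_trans sH) cr _; apply: (conj_trans sH) _ (conj_sym sH cs).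
  by exists k.
split=> Hx.
  apply/(E2 x); exact: (conj_trans sH) (conj_sym sH c12) ((E1 x).1 Hx).
apply/(E1 x); exact: (conj_trans sH) c12 ((E2 x).1 Hx).
Qed.
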